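(* For every tree $T$, $\operatorname{diam}(\mathcal{C}_3(T))$ equals the maximum of $\|h\|_1$ over all balanced labelings $h$ of $T$.
   Context: Let $T$ be a finite tree with vertex set $V$ and edge set $E$. A proper 3-coloring of $T$ is a map $f\colon V\to\mathbb{Z}/3\mathbb{Z}$ with $f(u)\neq f(v)$ for every edge $uv\in E$. The 3-coloring graph $\mathcal{C}_3(T)$ has the proper 3-colorings as vertices, two colorings adjacent iff they differ at exactly one vertex. A labeling of $T$ is a map $h\colon V\to\mathbb{Z}$ with $|h(u)-h(v)|\le 1$ for every edge $uv\in E$; $\|h\|_1=\sum_{v\in V}|h(v)|$, and $h+m$ denotes $v\mapsto h(v)+m$. A labeling $h$ is balanced if $\|h\|_1\le\|h+3m\|_1$ for all $m\in\mathbb{Z}$. *)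

(* Defs.v *)
From mathcomp Require Import all_boot all_order all_algebra.
Set Implicit Arguments. Unset Strict Implicit. Unset Printing Implicit Defensive.
Import Order.TTheory GRing.Theory Num.Theory.

(* A finite simple graph on V : finType is a symmetric irreflexive rel e.
   It is a tree if it is nonempty, connected and has #|V|-1 (unordered) edges,
   i.e. 2(#|V|-1) ordered adjacent pairs. *)
Definition is_tree (V : finType) (e : rel V) : Prop :=
  [/\ symmetric e, irreflexive e, 0 < #|V|,
      (forall u v, connect e u v) &
      #|[set p : V * V | e p.1 p.2]| = 2 * (#|V| - 1)].

Definition proper3 (V : finType) (e : rel V) (f : {ffun V -> 'Z_3}) : bool :=
  [forall u, forall v, e u v ==> (f u != f v)].

Definition col_adj (V : finType) (e : rel V) : rel {ffun V -> 'Z_3} :=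
  fun f g => [&& proper3 e f, proper3 e g & #|[set v | f v != g v]| == 1].

Definition col_walk (V : finType) (e : rel V) (f g : {ffun V -> 'Z_3})
  (s : seq {ffun V -> 'Z_3}) : bool :=
  path (col_adj e) f s && (last f s == g).

Definition col_diam (V : finType) (e : rel V) (D : nat) : Prop :=
  (forall f g, proper3 e f -> proper3 e g ->
     exists s, col_walk e f g s /\ size s <= D) /\
  (exists f g, [/\ proper3 e f, proper3 e g &
     forall s, col_walk e f g s -> D <= size s]).

Definition labeling (V : finType) (e : rel V) (h : V -> int) : Prop :=
  forall u v, e u v -> (`|h u - h v| <= 1)%R.

Definition norm1 (V : finType) (h : V -> int) : nat := \sum_(v : V) `|h v|%N.

Definition balanced (V : finType) (h : V -> int) : Prop :=
  forall m : int, norm1 h <= norm1 (fun v => (h v + 3 * m)%R).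

Definition max_balanced (V : finType) (e : rel V) (D : nat) : Prop :=
  (exists h, [/\ labeling e h, balanced h & norm1 h = D]) /\
  (forall h, labeling e h -> balanced h -> norm1 h <= D).

(* Main.v *)
Require Import Defs.
From mathcomp Require Import all_boot all_order all_algebra zify.
From Stdlib Require Import Classical.
Set Implicit Arguments. Unset Strict Implicit. Unset Printing Implicit Defensive.
Import Order.TTheory GRing.Theory Num.Theory.
Local Open Scope ring_scope.
Definition Z3 (a : int) : 'Z_3 := a%:~R.

Lemma Z3_nat (a : int) : Z3 a = (absz (a %% 3)%Z)%:R.
Proof.
rewrite /Z3 {1}(divz_eq a 3) rmorphD rmorphM /=.
have -> : ((3:int)%:~R : 'Z_3) = 0 by apply: val_inj.
rewrite mulr0 add0r.
have H : (0 <= a %% 3)%Z by lia.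
by rewrite -{1}(gez0_abs H) pmulrn.
Qed.

Lemma Z3_eq (a b : int) : (Z3 a == Z3 b) = ((a - b) %% 3 == 0)%Z.
Proof.
rewrite !Z3_nat -val_eqE /= !val_Zp_nat //.
apply/eqP/eqP; rewrite !modn_small; lia.
Qed.

Lemma Z3_val (x : 'Z_3) : x = Z3 (val x).
Proof. by rewrite /Z3 -pmulrn natr_Zp. Qed.
Local Close Scope ring_scope.

Lemma conn_ind (T : finType) (r : rel T) (P : T -> Prop) u v :
  P u -> (forall x y, P x -> r x y -> P y) -> connect r u v -> P v.
Proof.
move=> Pu IH /connectP [p pth ->]; elim: p u Pu pth => //= a p IHp u Pu /andP[ra pth].
exact: IHp (IH _ _ Pu ra) pth.
Qed.

Section Tree.
Variables (V : finType) (e : rel V).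
Hypotheses (esym : symmetric e) (eirr : irreflexive e).

Definition relS (S : {set V}) : rel V := fun x y => [&& e x y, x \in S & y \in S].
Definition pairsS (S : {set V}) := [set p : V * V | [&& e p.1 p.2, p.1 \in S & p.2 \in S]].
Definition deg (S : {set V}) x := #|[set y in S | e x y]|.
Definition treeS (S : {set V}) :=
  [/\ 0 < #|S|, {in S &, forall u v, connect (relS S) u v} & #|pairsS S| = 2 * (#|S| - 1)].

Lemma deg_sum S : #|pairsS S| = \sum_(x in S) deg S x.
Proof.
rewrite /deg; under eq_bigr => x _ do rewrite -sum1_card.
rewrite pair_big_dep /= -sum1_card; apply: eq_bigl => -[a b] /=.
by rewrite !inE /=; case: (a \in S); case: (b \in S); case: (e a b).
Qed.

Lemma leaf_exists S : treeS S -> 1 < #|S| ->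
  exists l, l \in S /\ deg S l = 1.
Proof.
case=> _ Hc Hp H2.
have deg1 : forall x, x \in S -> 0 < deg S x.
  move=> x xS; have [y [yS yx]] : exists y, y \in S /\ y != x.
    case/card_gt1P: H2 => a [b [aS bS ab]].
    case: (a =P x) => [ax|ax]; first by exists b; split=> //; rewrite -ax eq_sym.
    by exists a; split=> //; apply/eqP.
  move: (Hc x y xS yS) => /connectP [[|z p] /= pth yE]; first by rewrite yE eqxx in yx.
  case/andP: pth => /and3P [exz _ zS] _.
  by apply/card_gt0P; exists z; rewrite inE zS exz.
case: (boolP [exists x in S, deg S x < 2]).
  case/exists_inP => l lS ld; exists l; split=> //.
  by move: (deg1 l lS) ld; lia.
move/exists_inPn => Hall; exfalso.
have : \sum_(x in S) 2 <= \sum_(x in S) deg S x.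
  by apply: leq_sum => x xS; move: (Hall x xS); rewrite ltnNge negbK.
rewrite sum_nat_const -deg_sum Hp; lia.
Qed.

Lemma lift_tree (d : V -> V -> int) :
  (forall u v, e u v -> d v u = (- d u v)%R) ->
  forall n (S : {set V}), #|S| = n -> treeS S ->
  exists H : V -> int, forall u v, u \in S -> v \in S -> e u v -> (H u - H v = d u v)%R.
Proof.
move=> dA; elim=> [|n IH] S Sn tS.
  by case: tS; rewrite Sn.
case: (leqP #|S| 1) => S1.
  exists (fun _ => 0%R) => u v uS vS; have := card_le1_eqP S1 u v uS vS.
  by move=> ->; rewrite eirr.
have [l [lS ld]] := leaf_exists tS S1.
have [p pE] : exists p, [set y in S | e l y] = [set p] by apply/cards1P/eqP.
have : p \in [set y in S | e l y] by rewrite pE set11.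
rewrite inE => /andP[pS elp].
have nb : forall y, y \in S -> e l y -> y = p.
  by move=> y yS ely; apply/set1P; rewrite -pE inE yS ely.
have pl : p != l by apply/eqP => pl; move: elp; rewrite pl eirr.
set S' := S :\ l.
have S'n : #|S'| = n by move: (cardsD1 l S); rewrite lS Sn /= add1n => -[].
case: tS => S0 Sc Sp.
have tS' : treeS S'.
  split.
  - by rewrite S'n; lia.
  - move=> u v; rewrite !inE => /andP[ul uS] /andP[vl vS].
    pose P x := (x = l /\ connect (relS S') u p) \/ (x != l /\ connect (relS S') u x).
    have : P v.
      apply: (conn_ind (r := relS S) _ _ (Sc u v uS vS)); first by right; split.
      move=> x y [[-> cup]|[xl cux]] /and3P[exy xS yS].
      + by right; split=> //; rewrite (nb y yS exy) //.
      + case: (y =P l) => [yl|yl].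
          by left; split=> //; rewrite -(nb x xS) // esym -yl.
        right; split; first by apply/eqP.
        have yl' : y != l by apply/eqP.
        apply: connect_trans cux (connect1 _).
        by rewrite /relS !inE exy xl xS yS yl'.
    by case=> [[vl'] | [_ ->]] //; rewrite vl' eqxx in vl.
  - have E : pairsS S' = pairsS S :\ (l, p) :\ (p, l).
      apply/setP => -[a b]; rewrite !inE /= !xpair_eqE.
      case: (a =P l) => [->|al]; case: (b =P l) => [->|bl] /=; rewrite ?eirr ?andbF //.
      + symmetry; apply/negbTE/and5P => -[_ bp elb _ bS].
        by rewrite (nb b bS elb) eqxx in bp.
      + symmetry; rewrite andbT; apply/negbTE/and4P => -[ap eal aS _].
        have := nb a aS; rewrite esym => /(_ eal) ael; by rewrite ael eqxx in ap.
    have lpin : (l, p) \in pairsS S by rewrite inE /= elp lS pS.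
    have plin : (p, l) \in pairsS S :\ (l, p).
      by rewrite !inE /= xpair_eqE (negbTE pl) /= esym elp lS pS.
    move: (cardsD1 (l, p) (pairsS S)) (cardsD1 (p, l) (pairsS S :\ (l, p))).
    rewrite lpin plin -E Sp S'n Sn; lia.
have [H' H'P] := IH S' S'n tS'.
exists (fun x => if x == l then (H' p + d l p)%R else H' x) => u v uS vS euv.
case: (u =P l) => [ul|ul]; case: (v =P l) => [vl|vl].
- by move: euv; rewrite ul vl eirr.
- have vp : v = p by apply: nb => //; rewrite -ul.
  by rewrite ul vp; lia.
- have up : u = p by apply: nb => //; rewrite -vl esym.
  rewrite up vl (dA _ _ elp); lia.
- apply: H'P => //; rewrite !inE ?uS ?vS andbT; apply/eqP => //.
Qed.

End Tree.

Lemma max_exists (P : nat -> Prop) B :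
  (exists n, P n) -> (forall n, P n -> n <= B) -> exists m, P m /\ forall n, P n -> n <= m.
Proof.
elim: B => [|B IH] ex bd.
  case: ex => n Pn; exists n; split=> // k Pk; move: (bd k Pk) (bd n Pn); lia.
case: (classic (P B.+1)) => PB; first by exists B.+1.
apply: IH => // n Pn; have := bd n Pn; rewrite leq_eqVlt ltnS; case/orP=> //.
by move/eqP=> nB; rewrite nB in Pn.
Qed.

Lemma min_exists (A : Type) (F : A -> nat) (a : A) : exists a0, forall a', F a0 <= F a'.
Proof.
move: {2}(F a) (erefl (F a)) => n; elim/ltn_ind: n a => n IH a Fa.
case: (classic (exists a', F a' < F a)) => [[a' lt]|nex].
  by apply: (IH (F a')) => //; rewrite -Fa.
exists a => a'; rewrite leqNgt; apply/negP => lt; apply: nex; by exists a'.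
Qed.

Section Main.
Variables (V : finType) (e : rel V).
Hypothesis tree : is_tree e.

Lemma tesym : symmetric e. Proof. by case: tree. Qed.
Lemma teirr : irreflexive e. Proof. by case: tree. Qed.
Lemma conn u v : connect e u v. Proof. by case: tree. Qed.
Lemma root_ex : exists r : V, True.
Proof. by case: tree => _ _ /card_gt0P [r _] _ _; exists r. Qed.

Lemma tlift (d : V -> V -> int) : (forall u v, e u v -> d v u = (- d u v)%R) ->
  exists H : V -> int, forall u v, e u v -> (H u - H v = d u v)%R.
Proof.
move=> dA; have tT : treeS e [set: V].
  case: tree => _ _ V0 Vc Vp; split.
  - by rewrite cardsT.
  - move=> u v _ _; rewrite (@eq_connect _ _ e) ?Vc // => x y; by rewrite /relS !inE !andbT.
  - rewrite cardsT -Vp; apply: eq_card => x; by rewrite !inE !andbT.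
have [H HP] := lift_tree tesym teirr dA (erefl _) tT.
by exists H => u v euv; apply: HP; rewrite ?inE.
Qed.

Definition height (H : V -> int) := forall u v, e u v -> `|(H u - H v)%R| = 1%R.
Definition colz (H : V -> int) : {ffun V -> 'Z_3} := [ffun v => Z3 (H v)].

Lemma col_proper H : height H -> proper3 e (colz H).
Proof.
move=> hH; apply/forallP => u; apply/forallP => v; apply/implyP => euv.
rewrite !ffunE Z3_eq; have := hH u v euv => h1; apply/negP => /eqP; lia.
Qed.

Lemma col_adj_sym f g : col_adj e f g = col_adj e g f.
Proof.
rewrite /col_adj andbCA; do 2 congr andb.
by rewrite (@eq_card _ _ [set v | g v != f v]) // => x; rewrite !inE eq_sym.
Qed.

End Main.

Section Main2.
Variables (V : finType) (e : rel V).
Hypothesis tree : is_tree e.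
Local Notation height := (height e).
Let esym := tesym tree.
Let eirr := teirr tree.
Let col_adj_sym := @col_adj_sym V e.

Lemma move_down H1 H2 v : height H1 -> height H2 -> (forall w, (2 %| (H1 w - H2 w)%R)%Z) ->
  (H2 v < H1 v)%R -> (forall w, (H2 w < H1 w)%R -> (H1 w <= H1 v)%R) ->
  let H1' := fun x => if x == v then (H1 v - 2)%R else H1 x in
  [/\ height H1', (forall w, (2 %| (H1' w - H2 w)%R)%Z),
      (\sum_w `|(H1' w - H2 w)%R|%N).+2 = \sum_w `|(H1 w - H2 w)%R|%N &
      col_adj e (colz H1) (colz H1')].
Proof.
move=> h1 h2 ev lt mx H1'.
have nbv : forall w, e v w -> H1 w = (H1 v - 1)%R.
  move=> w evw; have := h1 v w evw; have := h2 v w evw; have := ev v; have := ev w.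
  case: (ltrP (H2 w) (H1 w)) => l; first have := mx w l; lia.
have hH1' : height H1'.
  move=> u w euw; rewrite /H1'; case: (u =P v) => [uv|uv]; case: (w =P v) => [wv|wv].
  - by move: euw; rewrite uv wv eirr.
  - rewrite -uv in nbv *; rewrite (nbv w euw); lia.
  - rewrite -wv in nbv *; rewrite (nbv u); [lia | by rewrite esym].
  - exact: h1.
split=> //.
- move=> w; rewrite /H1'; case: (w =P v) => [->|_]; last exact: ev.
  have := ev v; lia.
- rewrite (bigD1 v) // [in RHS](bigD1 v) //= /H1' eqxx.
  rewrite (eq_bigr (fun w => `|(H1 w - H2 w)%R|%N)); last by move=> w /negbTE ->.
  have := ev v; move: lt; lia.
- rewrite /col_adj !col_proper //=; apply/cards1P; exists v; apply/setP => x.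
  rewrite !inE !ffunE /H1'; case: (x =P v) => [->|xv]; last by rewrite eqxx.
  rewrite Z3_eq; apply/negP => /eqP; lia.
Qed.

Lemma walk_build N : forall H1 H2, height H1 -> height H2 -> (forall w, (2 %| (H1 w - H2 w)%R)%Z) ->
  \sum_w `|(H1 w - H2 w)%R|%N = N ->
  exists s, col_walk e (colz H1) (colz H2) s /\ 2 * size s <= N.
Proof.
elim/ltn_ind: N => N IH H1 H2 h1 h2 ev sN.
case: (boolP [exists w, H2 w < H1 w]%R) => [/existsP [w0 lt0]|nex1].
  case: (@arg_maxP _ _ _ w0 [pred w | (H2 w < H1 w)%R] (fun w => H1 w) lt0) => v ltv mxv.
  have [h1' ev' sum' adj] := move_down h1 h2 ev ltv mxv.
  have [|s [ws ss]] := IH _ _ _ _ h1' h2 ev' (erefl _); first by rewrite -sN -sum'.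
  exists ((colz (fun x => if x == v then (H1 v - 2)%R else H1 x)) :: s); split.
    by rewrite /col_walk /= adj.
  rewrite -sN -sum' /=; move: ss; move: (\sum_w _) => S; lia.
case: (boolP [exists w, H1 w < H2 w]%R) => [/existsP [w0 lt0]|nex2].
  case: (@arg_maxP _ _ _ w0 [pred w | (H1 w < H2 w)%R] (fun w => H2 w) lt0) => v ltv mxv.
  have ev2 : forall w, (2 %| (H2 w - H1 w)%R)%Z by move=> w; have := ev w; lia.
  have [h2' ev' sum' adj] := move_down h2 h1 ev2 ltv mxv.
  set H2' := (fun x => if x == v then (H2 v - 2)%R else H2 x) in h2' ev' sum' adj.
  have ev'' : forall w, (2 %| (H1 w - H2' w)%R)%Z by move=> w; have := ev' w; rewrite /H2'; move: (if _ then _ else _) => z; lia.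
  have sw : forall F G : V -> int, \sum_w `|(F w - G w)%R|%N = \sum_w `|(G w - F w)%R|%N.
    by move=> F G; apply: eq_bigr => w _; lia.
  have [|s [ws ss]] := IH _ _ _ _ h1 h2' ev'' (erefl _).
    by rewrite -sN sw (sw H1) -sum'.
  exists (rcons s (colz H2)); split.
    case/andP: ws => ps /eqP ls.
    by rewrite /col_walk rcons_path ps ls last_rcons col_adj_sym adj eqxx.
  rewrite size_rcons -sN (sw H1) -sum' -(sw H1); move: ss; move: (\sum_w _) => S; lia.
exists [::]; split=> //=; rewrite /col_walk /=; apply/eqP/ffunP => x; rewrite !ffunE.
have := negP nex1; have := negP nex2 => n2 n1.
have -> : H1 x = H2 x; last by [].
apply/eqP; rewrite eq_le !leNgt; apply/andP; split; apply/negP => lt.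
- by apply: n1; apply/existsP; exists x.
- by apply: n2; apply/existsP; exists x.
Qed.


Lemma proper_nb f u w : proper3 e f -> e u w -> f u != f w.
Proof. by move=> /forallP /(_ u) /forallP /(_ w) /implyP; apply. Qed.

Lemma step_lift H f' : height H -> col_adj e (colz H) f' ->
  exists H', [/\ height H', colz H' = f', (forall w, (2 %| (H' w - H w)%R)%Z) &
                 \sum_w `|(H' w - H w)%R|%N = 2].
Proof.
move=> hH /and3P [_ pf' /eqP c1].
have [v vE] : exists v, [set x | colz H x != f' x] = [set v] by apply/cards1P/eqP.
have same : forall x, x != v -> f' x = Z3 (H x).
  move=> x xv; case: (f' x =P Z3 (H x)) => // ne; exfalso.
  have : x \in [set v] by rewrite -vE inE ffunE eq_sym; apply/eqP.
  by rewrite inE => xv'; rewrite xv' in xv.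
have fv : f' v != Z3 (H v).
  have : v \in [set v] by rewrite set11.
  by rewrite -vE inE ffunE eq_sym.
pose t : int := if f' v == Z3 (H v + 2)%R then 2%R else (-2)%R.
have tv : t = 2%R \/ t = (-2)%R by rewrite /t; case: ifP; [left|right].
have ft : f' v = Z3 (H v + t)%R.
  rewrite /t; case: ifP => [/eqP //|/negbT n2].
  move: fv n2; rewrite (Z3_val (f' v)) !Z3_eq => a b; apply/eqP; rewrite Z3_eq.
  move: a b; move: (val (f' v)) => k; lia.
clearbody t.
exists (fun x => if x == v then (H v + t)%R else H x); split.
- move=> u w euw; case: (u =P v) => [uv|uv]; case: (w =P v) => [wv|wv].
  + by move: euw; rewrite uv wv eirr.
  + have := proper_nb pf' euw; rewrite uv ft same; last by apply/eqP.
    rewrite Z3_eq; have := hH u w euw; rewrite uv => h1 h2; move/negP: h2 => h2.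
    move: h1 h2; case: tv => ->; move: (H v) (H w) => a b; lia.
  + have := proper_nb pf' euw; rewrite wv ft same; last by apply/eqP.
    rewrite Z3_eq; have := hH u w euw; rewrite wv => h1 h2; move/negP: h2 => h2.
    move: h1 h2; case: tv => ->; move: (H v) (H u) => a b; lia.
  + exact: hH.
- apply/ffunP => x; rewrite ffunE; case: (x =P v) => [->|xv]; first by rewrite ft.
  by rewrite same //; apply/eqP.
- move=> w; case: (w =P v) => [->|_]; [case: tv => ->; lia | lia].
- rewrite (bigD1 v) //= big1 => [|x xv]; last by rewrite (negbTE xv); lia.
  rewrite eqxx; case: tv => ->; lia.
Qed.

Lemma walk_lift s : forall H, height H -> path (col_adj e) (colz H) s ->
  exists H', [/\ height H', colz H' = last (colz H) s,
     (forall w, (2 %| (H' w - H w)%R)%Z) & \sum_w `|(H' w - H w)%R|%N <= 2 * size s].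
Proof.
elim: s => [|f s IH] H hH /=.
  move=> _; exists H; split=> // [w|]; first by rewrite subrr.
  by rewrite big1 // => w _; rewrite subrr.
case/andP => adj pth; have [H1 [h1 cH1 ev1 s1]] := step_lift hH adj.
rewrite -cH1 in pth *; have [H' [h' c' ev' s']] := IH H1 h1 pth.
exists H'; split=> //.
- by move=> w; have := ev' w; have := ev1 w; lia.
- apply: leq_trans (_ : \sum_w (`|(H' w - H1 w)%R|%N + `|(H1 w - H w)%R|%N) <= _).
    by apply: leq_sum => w _; lia.
  rewrite big_split /= s1; lia.
Qed.


Lemma col_unique H H' : height H -> height H' -> colz H = colz H' ->
  exists c : int, (3 %| c)%Z /\ forall v, H' v = (H v + c)%R.
Proof.
move=> h h' eqc; have [r _] := root_ex tree.
have cz : forall x, ((H x - H' x) %% 3 = 0)%Z.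
  by move=> x; have := congr1 (fun f : {ffun V -> 'Z_3} => f x) eqc; rewrite !ffunE => /eqP; rewrite Z3_eq => /eqP.
exists (H' r - H r)%R; split; first by have := cz r; lia.
move=> v; apply: (conn_ind (P := fun v => H' v = (H v + (H' r - H r))%R) _ _ (conn tree r v)).
  lia.
move=> x y hx exy; have := h x y exy; have := h' x y exy; have := cz x; have := cz y; lia.
Qed.

Lemma col_lift f : proper3 e f -> exists H, height H /\ colz H = f.
Proof.
move=> pf.
pose d u v : int := if ((Posz (val (f u)) - Posz (val (f v)))%R %% 3 == 1)%Z then 1%R else (-1)%R.
have dA : forall u v, e u v -> d v u = (- d u v)%R.
  move=> u v euv; have ne : val (f u) != val (f v) by rewrite val_eqE; exact: proper_nb pf euv.
  have ha : val (f u) < 3 := ltn_ord (f u); have hb : val (f v) < 3 := ltn_ord (f v).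
  rewrite /d; move: (val (f u)) (val (f v)) ne ha hb => a b ne ha hb.
  case: ifP => [/eqP|/negbT/eqP] h1; case: ifP => [/eqP|/negbT/eqP] h2; lia.
have [H0 H0P] := tlift tree dA.
have [r _] := root_ex tree.
pose H x := (H0 x + (Posz (val (f r)) - H0 r))%R.
exists H; split.
- move=> u v euv; move: (H0P u v euv); rewrite /H /d; case: ifP => _ h; lia.
- apply/ffunP => x; rewrite ffunE (Z3_val (f x)); apply/eqP; rewrite Z3_eq; apply/eqP.
  apply: (conn_ind (P := fun x => ((H x - Posz (val (f x)))%R %% 3 = 0)%Z) _ _ (conn tree r x)).
    rewrite /H; lia.
  move=> a b ha eab; have ne : val (f a) != val (f b) by rewrite val_eqE; exact: proper_nb pf eab.
  have hx : val (f a) < 3 := ltn_ord (f a); have hy : val (f b) < 3 := ltn_ord (f b).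
  have := H0P a b eab; rewrite /H /d in ha *.
  move: (val (f a)) (val (f b)) ne ha hx hy => x1 y1 ne ha hx hy.
  case: ifP => [/eqP|/negbT/eqP] h1 h2; lia.
Qed.

Lemma parity H1 H2 : height H1 -> height H2 ->
  exists b : int, forall v, (2 %| (H1 v - H2 v - b)%R)%Z.
Proof.
move=> h1 h2; have [r _] := root_ex tree; exists (H1 r - H2 r)%R => v.
apply: (conn_ind (P := fun v => (2 %| (H1 v - H2 v - (H1 r - H2 r))%R)%Z) _ _ (conn tree r v)).
  lia.
move=> x y hx exy; have := h1 x y exy; have := h2 x y exy; lia.
Qed.

Lemma conn_short u v : exists p, [/\ path e u p, last u p = v & size p < #|V|].
Proof.
case/connectP: (conn tree u v) => p pth ->.
case: (shortenP pth) => p' pth' uq _; exists p'; split=> //.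
move/card_uniqP: uq => cu; have := max_card (mem (u :: p')); rewrite cu.
by [].
Qed.

Lemma lab_path h : labeling e h -> forall p u, path e u p ->
  (`|(h u - h (last u p))%R| <= (size p)%:Z)%R.
Proof.
move=> hl; elim=> [|a p IH] u /=; first by rewrite subrr.
case/andP => eua pth; have := IH a pth; have := hl u a eua; lia.
Qed.

Lemma lab_bound h : labeling e h -> balanced h -> forall u, `|h u|%N <= #|V|.+1.
Proof.
move=> hl hb; have [r _] := root_ex tree.
have [v hv] : exists v, (h v <= 1)%R.
  case: (boolP [exists v, h v <= 1]%R) => [/existsP [v hv]|/existsPn nv]; first by exists v.
  exfalso; have := hb (-1)%R; rewrite /norm1 leqNgt => /negP; apply.
  rewrite (bigD1 r) // [X in _ < X](bigD1 r) //=.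
  have Hr : `|(h r + 3 * -1)%R|%N < `|h r|%N by have := negP (nv r); lia.
  have : \sum_(i | i != r) `|(h i + 3 * -1)%R|%N <= \sum_(i | i != r) `|h i|%N.
    by apply: leq_sum => i _; have := negP (nv i); lia.
  move: Hr; move: (\sum_(i | _) _) (\sum_(i | _) _) => a b; lia.
have [w hw] : exists w, (-1 <= h w)%R.
  case: (boolP [exists v, -1 <= h v]%R) => [/existsP [v1 hv1]|/existsPn nv]; first by exists v1.
  exfalso; have := hb 1%R; rewrite /norm1 leqNgt => /negP; apply.
  rewrite (bigD1 r) // [X in _ < X](bigD1 r) //=.
  have Hr : `|(h r + 3 * 1)%R|%N < `|h r|%N by have := negP (nv r); lia.
  have : \sum_(i | i != r) `|(h i + 3 * 1)%R|%N <= \sum_(i | i != r) `|h i|%N.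
    by apply: leq_sum => i _; have := negP (nv i); lia.
  move: Hr; move: (\sum_(i | _) _) (\sum_(i | _) _) => a b; lia.
move=> u.
have [p [pth lp sp]] := conn_short u v; have := lab_path hl pth; rewrite lp.
have [q [qth lq sq]] := conn_short u w; have := lab_path hl qth; rewrite lq.
lia.
Qed.

Lemma norm_bound h : labeling e h -> balanced h -> norm1 h <= #|V| * #|V|.+1.
Proof.
move=> hl hb; rewrite /norm1; apply: (@leq_trans (\sum_(u : V) #|V|.+1)); first by apply: leq_sum => u _; exact: lab_bound.
by rewrite sum_nat_const cardT.
Qed.

End Main2.

Theorem mainTheorem7 (V : finType) (e : rel V) :
  is_tree e -> exists D : nat, col_diam e D /\ max_balanced e D.
Proof.
move=> tree.
pose P n := exists h, [/\ labeling e h, balanced h & norm1 h = n].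
have [D [PD Dmax]] : exists D, P D /\ forall n, P n -> n <= D.
  apply: (@max_exists P (#|V| * #|V|.+1)).
    exists 0; exists (fun _ => 0%R); split.
    - by move=> u v _; rewrite subrr.
    - by move=> m; rewrite /norm1 big1.
    - by rewrite /norm1 big1.
  move=> n [h [hl hb <-]]; have := norm_bound tree hl hb. done.
exists D; split; last first.
  split; first exact PD.
  by move=> h hl hb; apply: Dmax; exists h.
split.
- move=> f g pf pg.
  have [Hf [hf cf]] := col_lift tree pf.
  have [Hg [hg cg]] := col_lift tree pg.
  have [b hb] := parity tree hf hg.
  pose s3 : int := if (2 %| b)%Z then 0%R else 3%R.
  have s3v : (2 %| b)%Z /\ s3 = 0%R \/ ~~ (2 %| b)%Z /\ s3 = 3%R.
    by rewrite /s3; case: ifP => H; [left|right; split=> //; apply/negbT].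
  clearbody s3.
  pose Hg1 v := (Hg v + s3)%R.
  have ev1 : forall v, (2 %| (Hf v - Hg1 v)%R)%Z.
    by move=> v; have := hb v; rewrite /Hg1; case: s3v => -[/idP ? ->] ?; lia.
  pose h v := ((Hf v - Hg1 v)%R %/ 2)%Z.
  have hl : labeling e h.
    move=> u v euv; have := hf u v euv; have := hg u v euv; have := ev1 u; have := ev1 v.
    rewrite /h /Hg1; lia.
  have [k0 k0min] := min_exists (fun k : int => norm1 (fun v => (h v + 3 * k)%R)) 0%R.
  pose h' v := (h v + 3 * k0)%R.
  have hl' : labeling e h' by move=> u v euv; have := hl u v euv; rewrite /h'; lia.
  have hb' : balanced h'.
    move=> m; apply: leq_trans (k0min (k0 + m)%R) _.
    by rewrite /norm1 /h' leq_eqVlt; apply/orP; left; apply/eqP; apply: eq_bigr => v _; lia.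
  have nD : norm1 h' <= D by apply: Dmax; exists h'.
  pose Hg2 v := (Hg1 v - 6 * k0)%R.
  have hg2 : height e Hg2 by move=> u v euv; have := hg u v euv; rewrite /Hg2 /Hg1; lia.
  have cg2 : colz Hg2 = g.
    rewrite -cg; apply/ffunP => v; rewrite !ffunE; apply/eqP; rewrite Z3_eq /Hg2 /Hg1.
    by case: s3v => -[_ ->]; lia.
  have ev2 : forall v, (2 %| (Hf v - Hg2 v)%R)%Z.
    by move=> v; have := ev1 v; rewrite /Hg2; lia.
  have [s [ws ss]] := walk_build tree hf hg2 ev2 (erefl _).
  exists s; split; first by rewrite -cf -cg2.
  have : \sum_v `|(Hf v - Hg2 v)%R|%N = 2 * norm1 h'.
    rewrite /norm1 big_distrr /=; apply: eq_bigr => v _; have := ev1 v.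
    rewrite /Hg2 /h' /h; lia.
  move: ss nD; move: (\sum_v _) (norm1 h') => a c; lia.
- have [h [hl hb hD]] := PD.
  pose d u v : int := if h u == h v then (if (enum_rank u < enum_rank v)%N then 1%R else (-1)%R)
                      else (h v - h u)%R.
  have dA : forall u v, e u v -> d v u = (- d u v)%R.
    move=> u v euv; have uv : u != v by apply/eqP => uv; move: euv; rewrite uv (teirr tree).
    have ruv : nat_of_ord (enum_rank u) != nat_of_ord (enum_rank v).
      by apply: contra uv => /eqP H; apply/eqP; apply: enum_rank_inj; exact: ord_inj H.
    rewrite /d eq_sym; case: (h u =P h v) => [E|NE]; last lia.
    move: ruv; move: (nat_of_ord (enum_rank u)) (nat_of_ord (enum_rank v)) => a c nac.
    by case: ifP => h1; case: ifP => h2; lia.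
  have [Hg Hgd] := tlift tree dA.
  have hg : height e Hg.
    move=> u v euv; rewrite Hgd // /d; have := hl u v euv.
    by case: ifP => [/eqP E|/negbT/eqP NE]; [case: ifP => _|]; lia.
  pose Hf v := (Hg v + 2 * h v)%R.
  have hf : height e Hf.
    move=> u v euv; have := Hgd u v euv; have := hl u v euv; rewrite /Hf /d.
    by case: ifP => [/eqP E|/negbT/eqP NE]; [case: ifP => _|]; lia.
  exists (colz Hf), (colz Hg); split; [exact: col_proper|exact: col_proper|].
  move=> s /andP [pth /eqP ls].
  have [H' [h' c' ev' s']] := walk_lift tree hf pth.
  rewrite ls in c'.
  have [c [c3 Hc]] := col_unique tree hg h' (esym c').
  pose m : int := (- (c %/ 6)%Z)%R.
  have key : \sum_w `|(H' w - Hf w)%R|%N = 2 * norm1 (fun v => (h v + 3 * m)%R).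
    rewrite /norm1 big_distrr /=; apply: eq_bigr => w _; have := ev' w.
    rewrite Hc /Hf /m; lia.
  have := hb m; rewrite hD; move: s' key; move: (\sum_w _) (norm1 _) => a a'; lia.
Qed.
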